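(* Let $K$ be a finite field, $G$ a finite group of order $m$ with a fixed ordering of its elements, $\varphi:KG\to K^m$ the associated coordinate isomorphism, and $KG=\mathcal{B}_0\oplus\cdots\oplus\mathcal{B}_s$ the block decomposition with $\mathcal{B}_i=f_iKG$. For each $i$ let $\pi_i:\mathcal{B}_i\to K^m$ be the restriction of $\varphi$ to $\mathcal{B}_i$. Let $\ell\ge1$, let $\mathcal{C}$ be a right $KG$-submodule of $KG^\ell$, identified with a linear code in $K^{m\ell}$ via $\varphi^\ell$, and let $\mathcal{C}_i=\mathcal{C}f_i\subseteq\mathcal{B}_i^\ell$. (a) Then $$\mathcal{C}=(\mathcal{B}_0\,\Box_{\pi_0}\,\mathcal{C}_0)\oplus\cdots\oplus(\mathcal{B}_s\,\Box_{\pi_s}\,\mathcal{C}_s),$$ where each $\mathcal{C}_i$ is a (possibly zero) linear code of length $\ell$ over the ring $\mathcal{B}_i$. (b) Suppose the blocks are ordered so that $\mathrm{d}(\mathcal{B}_0)\le\cdots\le\mathrm{d}(\mathcal{B}_s)$ and $\mathcal{C}\neq0$. Then $$\mathrm{d}(\mathcal{C})\ \ge\ \min_{0\le i\le s}\bigl\{\mathrm{d}(\mathcal{C}_i)\cdot \mathrm{d}(\mathcal{B}_0\oplus\cdots\oplus\mathcal{B}_i)\bigr\},$$ with the convention $\mathrm{d}(\mathcal{C}_i)=\infty$ if $\mathcal{C}_i=0$.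
   Context: For a ring $\mathcal{B}_i$, a $K$-linear injection $\pi_i:\mathcal{B}_i\to K^m$ and a subset $\mathcal{C}_i\subseteq\mathcal{B}_i^\ell$, the concatenated code is $\mathcal{B}_i\,\Box_{\pi_i}\,\mathcal{C}_i=\{(\pi_i(c_1),\ldots,\pi_i(c_\ell)) : (c_1,\ldots,c_\ell)\in\mathcal{C}_i\}\subseteq K^{m\ell}$. The Hamming weight of $v\in K^N$ is the number of nonzero coordinates; the minimum distance $\mathrm{d}$ of a $K$-subspace of $K^N$ (or of a subspace of $KG$, via $\varphi$) is the minimum weight of its nonzero elements. For a code $\mathcal{C}_i\subseteq\mathcal{B}_i^\ell$, $\mathrm{d}(\mathcal{C}_i)$ is the minimum, over nonzero $(c_1,\ldots,c_\ell)\in\mathcal{C}_i$, of the number of indices $j$ with $c_j\ne0$. The blocks $\mathcal{B}_i=f_iKG$ come from the primitive pairwise orthogonal central idempotents $f_0,\ldots,f_s$ of $KG$ with $\sum f_i=1$; $\mathcal{B}_0\oplus\cdots\oplus\mathcal{B}_i$ is regarded as a $K$-subspace of $KG\cong K^m$. *)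

(* Defs.v *)
From HB Require Import structures.
From mathcomp Require Import all_boot all_order all_algebra all_fingroup.
Set Implicit Arguments. Unset Strict Implicit. Unset Printing Implicit Defensive.
Import GRing.Theory.
Local Open Scope ring_scope.

(* The group algebra KG, represented through its coordinates:
   a = \sum_g a(g) g  is stored as the function g |-> a(g).  This is the
   coordinate isomorphism phi : KG -> K^m (up to the fixed ordering of G,
   which is irrelevant for Hamming weights). The additive structure is the
   pointwise one; the multiplication is the group-algebra (convolution)
   product [gamul], NOT the pointwise product of {ffun}. *)
Definition KG (K : finFieldType) (gT : finGroupType) := {ffun gT -> K}.

Definition gamul (K : finFieldType) (gT : finGroupType) (a b : KG K gT) : KG K gT :=
  [ffun g => \sum_(h : gT) a h * b (h^-1 * g)%g].

Definition gaone (K : finFieldType) (gT : finGroupType) : KG K gT :=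
  [ffun g => (g == 1%g)%:R].

Definition central (K : finFieldType) (gT : finGroupType) (e : KG K gT) :=
  forall a : KG K gT, gamul e a = gamul a e.

Definition idem (K : finFieldType) (gT : finGroupType) (e : KG K gT) :=
  gamul e e = e.

Definition primitive_central_idem (K : finFieldType) (gT : finGroupType)
  (e : KG K gT) :=
  [/\ e != 0, central e, idem e &
   forall e1 e2 : KG K gT, central e1 -> idem e1 -> central e2 -> idem e2 ->
     gamul e1 e2 = 0 -> e1 + e2 = e -> e1 = 0 \/ e2 = 0].

Definition wt (K : finFieldType) (gT : finGroupType) (a : KG K gT) : nat :=
  #|[set g | a g != 0]|.

Definition wtl (K : finFieldType) (gT : finGroupType) (l : nat)
  (c : {ffun 'I_l -> KG K gT}) : nat := (\sum_(j < l) wt (c j))%N.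

(* number of nonzero entries of c in B^l (weight for codes over the ring B_i) *)
Definition rwt (K : finFieldType) (gT : finGroupType) (l : nat)
  (c : {ffun 'I_l -> KG K gT}) : nat := #|[set j | c j != 0]|.

(* minimum of w over the nonzero elements of A; the default value
   (used only when A has no nonzero element) is irrelevant. *)
Definition mind (T : finType) (z : T) (w : T -> nat) (A : {set T}) : nat :=
  \big[minn/ (\max_(x in A) w x)%N]_(x in A | x != z) w x.

Definition block (K : finFieldType) (gT : finGroupType) (s : nat)
  (f : 'I_s.+1 -> KG K gT) (i : 'I_s.+1) : {set KG K gT} :=
  [set gamul (f i) a | a : KG K gT].

Definition blocksum (K : finFieldType) (gT : finGroupType) (s : nat)
  (f : 'I_s.+1 -> KG K gT) (i : 'I_s.+1) : {set KG K gT} :=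
  [set (\sum_(j < s.+1 | (j <= i)%N) gamul (f j) (a j))
     | a : {ffun 'I_s.+1 -> KG K gT}].

Definition rmul (K : finFieldType) (gT : finGroupType) (l : nat)
  (c : {ffun 'I_l -> KG K gT}) (r : KG K gT) : {ffun 'I_l -> KG K gT} :=
  [ffun j => gamul (c j) r].

Definition rsubmod (K : finFieldType) (gT : finGroupType) (l : nat)
  (C : {set {ffun 'I_l -> KG K gT}}) :=
  [/\ 0 \in C,
      forall x y, x \in C -> y \in C -> x + y \in C &
      forall x r, x \in C -> rmul x r \in C].

Definition compC (K : finFieldType) (gT : finGroupType) (l s : nat)
  (f : 'I_s.+1 -> KG K gT) (C : {set {ffun 'I_l -> KG K gT}}) (i : 'I_s.+1)
  : {set {ffun 'I_l -> KG K gT}} :=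
  [set rmul c (f i) | c in C].

(* concatenated code B_i \Box_{pi_i} C_i as a subset of K^{ml}, i.e. the image
   of C_i under pi_i^l; pi_i is the restriction of phi, which is the identity
   in our coordinate representation. *)
Definition concat (K : finFieldType) (gT : finGroupType) (l : nat)
  (Ci : {set {ffun 'I_l -> KG K gT}}) : {set {ffun 'I_l -> KG K gT}} :=
  [set [ffun j => (c : {ffun 'I_l -> KG K gT}) j] | c in Ci].

(* Main.v *)
Require Import Defs.
From HB Require Import structures.
From mathcomp Require Import all_boot all_order all_algebra all_fingroup.
From Stdlib Require Import FunctionalExtensionality.
Import GRing.Theory.
Local Open Scope ring_scope.

Lemma gamulE (K : finFieldType) (gT : finGroupType) (a b : KG K gT) g :
  gamul a b g = \sum_(h : gT) a h * b (h^-1 * g)%g.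
Proof. by rewrite /gamul ffunE. Qed.

Lemma gamul0l (K : finFieldType) (gT : finGroupType) (b : KG K gT) : gamul 0 b = 0.
Proof. apply/ffunP=> g; rewrite gamulE ffunE big1 // => h _; by rewrite ffunE mul0r. Qed.

Lemma gamul0r (K : finFieldType) (gT : finGroupType) (b : KG K gT) : gamul b 0 = 0.
Proof. apply/ffunP=> g; rewrite gamulE ffunE big1 // => h _; by rewrite ffunE mulr0. Qed.

Lemma gamulDl (K : finFieldType) (gT : finGroupType) (a b c : KG K gT) :
  gamul (a + b) c = gamul a c + gamul b c.
Proof.
apply/ffunP=> g; rewrite gamulE [in RHS]ffunE !gamulE -big_split /=; apply: eq_bigr => h _.
by rewrite ffunE mulrDl.
Qed.

Lemma gamulDr (K : finFieldType) (gT : finGroupType) (a b c : KG K gT) :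
  gamul c (a + b) = gamul c a + gamul c b.
Proof.
apply/ffunP=> g; rewrite gamulE [in RHS]ffunE !gamulE -big_split /=; apply: eq_bigr => h _.
by rewrite ffunE mulrDr.
Qed.

Lemma gamul_suml (K : finFieldType) (gT : finGroupType) (I : finType) (P : pred I)
   (F : I -> KG K gT) b :
  gamul (\sum_(i | P i) F i) b = \sum_(i | P i) gamul (F i) b.
Proof.
apply: (big_ind2 (fun x y => gamul x b = y)) => //; first exact: gamul0l.
by move=> x1 x2 y1 y2 <- <-; rewrite gamulDl.
Qed.

Lemma gamul_sumr (K : finFieldType) (gT : finGroupType) (I : finType) (P : pred I)
   (F : I -> KG K gT) b :
  gamul b (\sum_(i | P i) F i) = \sum_(i | P i) gamul b (F i).
Proof.
apply: (big_ind2 (fun x y => gamul b x = y)) => //; first exact: gamul0r.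
by move=> x1 x2 y1 y2 <- <-; rewrite gamulDr.
Qed.

Lemma gamul1r (K : finFieldType) (gT : finGroupType) (a : KG K gT) :
  gamul a (gaone K gT) = a.
Proof.
apply/ffunP=> g; rewrite gamulE (bigD1 g) //= big1 ?addr0.
  by rewrite ffunE mulVg eqxx mulr1.
by move=> h hg; rewrite ffunE -eq_mulVg1 (negbTE hg) mulr0.
Qed.

Lemma gamulA (K : finFieldType) (gT : finGroupType) (a b c : KG K gT) :
  gamul (gamul a b) c = gamul a (gamul b c).
Proof.
apply/ffunP=> g; rewrite !gamulE.
under eq_bigr => h _ do rewrite gamulE mulr_suml.
rewrite exchange_big /=; apply: eq_bigr => k _.
rewrite gamulE mulr_sumr (reindex_inj (mulgI k)) /=.
apply: eq_bigr => h _; rewrite mulKg mulrA invMg -mulgA; done.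
Qed.

Lemma rmul0 (K : finFieldType) (gT : finGroupType) l (r : KG K gT) :
  rmul (0 : {ffun 'I_l -> KG K gT}) r = 0.
Proof. by apply/ffunP=> j; rewrite !ffunE gamul0l. Qed.

Lemma rmulD (K : finFieldType) (gT : finGroupType) l (x y : {ffun 'I_l -> KG K gT}) r :
  rmul (x + y) r = rmul x r + rmul y r.
Proof. by apply/ffunP=> j; rewrite !ffunE gamulDl. Qed.

Lemma rmulA (K : finFieldType) (gT : finGroupType) l (x : {ffun 'I_l -> KG K gT}) a b :
  rmul (rmul x a) b = rmul x (gamul a b).
Proof. by apply/ffunP=> j; rewrite !ffunE gamulA. Qed.

Lemma rmul_suml (K : finFieldType) (gT : finGroupType) l (I : finType) (P : pred I)
  (F : I -> {ffun 'I_l -> KG K gT}) r :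
  rmul (\sum_(i | P i) F i) r = \sum_(i | P i) rmul (F i) r.
Proof.
apply: (big_ind2 (fun x y => rmul x r = y)) => //; first exact: rmul0.
by move=> x1 x2 y1 y2 <- <-; rewrite rmulD.
Qed.

Lemma rmul_sumr (K : finFieldType) (gT : finGroupType) l (I : finType) (P : pred I)
  (F : I -> KG K gT) (x : {ffun 'I_l -> KG K gT}) :
  rmul x (\sum_(i | P i) F i) = \sum_(i | P i) rmul x (F i).
Proof.
apply/ffunP=> j; rewrite ffunE sum_ffunE gamul_sumr; apply: eq_bigr => i _.
by rewrite ffunE.
Qed.

Lemma rmul1 (K : finFieldType) (gT : finGroupType) l (x : {ffun 'I_l -> KG K gT}) :
  rmul x (gaone K gT) = x.
Proof. by apply/ffunP=> j; rewrite ffunE gamul1r. Qed.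

Lemma concatE (K : finFieldType) (gT : finGroupType) l (X : {set {ffun 'I_l -> KG K gT}}) :
  concat X = X.
Proof.
rewrite /concat -[RHS]imset_id; apply: eq_imset => c.
by apply/ffunP=> j; rewrite ffunE.
Qed.

Lemma bigmin_le (I : eqType) (r : seq I) (P : pred I) (F : I -> nat) d x :
  x \in r -> P x -> (\big[minn/d]_(i <- r | P i) F i <= F x)%N.
Proof.
elim: r => //= y r IH; rewrite inE big_cons => /orP[/eqP<- Px|xr Px].
  by rewrite Px geq_minl.
case: (P y); last exact: IH. exact: leq_trans (geq_minr _ _) (IH xr Px).
Qed.

Lemma mind_le (T : finType) (z : T) (w : T -> nat) (A : {set T}) x :
  x \in A -> x != z -> (mind z w A <= w x)%N.
Proof.
move=> xA xz; rewrite /mind; apply: bigmin_le; first exact: mem_index_enum.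
by rewrite xA xz.
Qed.

Lemma mind_ge (T : finType) (z : T) (w : T -> nat) (A : {set T}) n x0 :
  x0 \in A -> x0 != z -> (forall x, x \in A -> x != z -> (n <= w x)%N) ->
  (n <= mind z w A)%N.
Proof.
move=> x0A x0z H; rewrite /mind; apply: (big_ind (fun v => n <= v)%N).
- apply: (leq_trans (H _ x0A x0z)); by rewrite (bigD1 x0) //= leq_maxl.
- by move=> a b ha hb; rewrite leq_min ha hb.
- by move=> x /andP[]; apply: H.
Qed.

Theorem theorem4p2 (K : finFieldType) (gT : finGroupType) (s l : nat)
  (f : 'I_s.+1 -> KG K gT)
  (hprim : forall i, primitive_central_idem (f i))
  (horth : forall i j, i != j -> gamul (f i) (f j) = 0)
  (hsum : \sum_(i < s.+1) f i = gaone K gT)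
  (hl : (1 <= l)%N)
  (C : {set {ffun 'I_l -> KG K gT}})
  (hC : rsubmod C) :
  (* (a) *)
  ((forall i : 'I_s.+1,
      (forall c, c \in compC f C i -> forall j, c j \in block f i) /\
      [/\ 0 \in compC f C i,
          forall x y, x \in compC f C i -> y \in compC f C i ->
            x + y \in compC f C i &
          forall x b, x \in compC f C i -> b \in block f i ->
            rmul x b \in compC f C i]) /\
   (forall c, c \in C <->
      exists cs : 'I_s.+1 -> {ffun 'I_l -> KG K gT},
        (forall i, cs i \in concat (compC f C i)) /\ c = \sum_(i < s.+1) cs i) /\
   (forall cs cs' : 'I_s.+1 -> {ffun 'I_l -> KG K gT},
      (forall i, cs i \in concat (compC f C i)) ->
      (forall i, cs' i \in concat (compC f C i)) ->
      \sum_(i < s.+1) cs i = \sum_(i < s.+1) cs' i -> cs = cs'))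
  /\
  (* (b) *)
  ((forall i j : 'I_s.+1, (i <= j)%N ->
      (mind (0%R : KG K gT) (@wt K gT) (block f i) <= mind (0%R : KG K gT) (@wt K gT) (block f j))%N) ->
   C != [set 0%R : {ffun 'I_l -> KG K gT}] ->
   (\big[minn/ (l * #|gT|)%N]_(i < s.+1 | compC f C i != [set 0%R : {ffun 'I_l -> KG K gT}])
        (mind (0%R : {ffun 'I_l -> KG K gT}) (@rwt K gT l) (compC f C i) *
         mind (0%R : KG K gT) (@wt K gT) (blocksum f i))
      <= mind (0%R : {ffun 'I_l -> KG K gT}) (@wtl K gT l) C)%N).
Proof.
have fc i : central (f i) by case: (hprim i).
have fid i : idem (f i) by case: (hprim i).
case: hC => C0 CD CM.
have Csum (I : finType) (P : pred I) (F : I -> {ffun 'I_l -> KG K gT}) :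
  (forall i, P i -> F i \in C) -> \sum_(i | P i) F i \in C.
  by move=> H; apply: (big_ind (fun v => v \in C)) => //; exact: CD.
have compP i x : reflect (exists2 c, c \in C & x = rmul c (f i)) (x \in compC f C i).
  exact: imsetP.
have ff i k : gamul (f i) (f k) = if i == k then f i else 0.
  by case: eqP => [<-|/eqP ik]; [exact: fid | exact: horth].
have proj i k (x : {ffun 'I_l -> KG K gT}) :
  rmul (rmul x (f i)) (f k) = if i == k then rmul x (f i) else 0.
  by rewrite rmulA ff; case: eqP => _ //; apply/ffunP=> j; rewrite !ffunE gamul0r.
have decomp (c : {ffun 'I_l -> KG K gT}) : c = \sum_(i < s.+1) rmul c (f i).
  by rewrite -rmul_sumr hsum rmul1.
have cproj (cs : 'I_s.+1 -> {ffun 'I_l -> KG K gT}) k :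
  (forall i, cs i \in compC f C i) -> rmul (\sum_(i < s.+1) cs i) (f k) = cs k.
  move=> H; rewrite rmul_suml (bigD1 k) //= big1 ?addr0.
    by case/compP: (H k) => c _ ->; rewrite proj eqxx.
  by move=> i ik; case/compP: (H i) => c _ ->; rewrite proj (negbTE ik).
split.
  split.
    move=> i; split.
      move=> c /compP[c0 _ ->] j; rewrite ffunE; apply/imsetP; exists (c0 j) => //.
      by rewrite fc.
    split.
    - by apply/compP; exists 0 => //; rewrite rmul0.
    - move=> x y /compP[cx Cx ->] /compP[cy Cy ->]; apply/compP; exists (cx + cy).
        exact: CD.
      by rewrite rmulD.
    - move=> x b /compP[cx Cx ->] /imsetP[a _ ->]; apply/compP.
      exists (rmul cx (gamul (f i) a)); first exact: CM.
      by rewrite !rmulA -gamulA fid fc gamulA fid.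
  split.
    move=> c; split.
      move=> Cc; exists (fun i => rmul c (f i)); split; last exact: decomp.
      by move=> i; rewrite concatE; apply/compP; exists c.
    case=> cs [H ->]; apply: Csum => i _; move: (H i); rewrite concatE.
    by case/compP=> c0 Cc0 ->; exact: CM.
  move=> cs cs' H H' E; apply: functional_extensionality_dep => k.
  have H1 i : cs i \in compC f C i by move: (H i); rewrite concatE.
  have H1' i : cs' i \in compC f C i by move: (H' i); rewrite concatE.
  by rewrite -(cproj cs k H1) -(cproj cs' k H1') E.
move=> _ C0ne.
have [c0 C0c0 c0nz] : exists2 c, c \in C & c != 0.
  case: (boolP [exists c, (c \in C) && (c != 0)]).
    by case/existsP=> c /andP[]; exists c.
  rewrite negb_exists => /forallP H; case/negP: C0ne; apply/eqP/setP => x.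
  rewrite in_set1; apply/idP/eqP => [Cx|->//].
  by move: (H x); rewrite Cx /= negbK => /eqP.
apply: (@mind_ge _ _ _ _ _ _ C0c0 c0nz) => c Cc cnz.
pose P i := rmul c (f i) != 0.
have [i0 Pi0] : exists i0, P i0.
  case: (boolP [exists i, P i]); first by case/existsP=> i; exists i.
  rewrite negb_exists => /forallP H; case/negP: cnz; rewrite [c]decomp.
  by apply/eqP; apply: big1 => i _; move: (H i); rewrite negbK => /eqP.
case: (arg_maxnP (fun i : 'I_s.+1 => nat_of_ord i) Pi0) => i Pi imax.
set ci := rmul c (f i).
have ciC : ci \in compC f C i by apply/compP; exists c.
have cinz : compC f C i != [set 0 : {ffun 'I_l -> KG K gT}].
  apply/negP => /eqP E; move: ciC; rewrite E in_set1; exact/negP.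
apply: leq_trans (@bigmin_le _ _ _ _ _ i (mem_index_enum i) cinz) _.
set D := mind _ _ (blocksum f i).
apply: (@leq_trans (rwt ci * D)); first by rewrite leq_mul2r (@mind_le _ _ _ _ _ ciC Pi) orbT.
have cjB j : c j \in blocksum f i.
  apply/imsetP; exists [ffun k => c j] => //.
  rewrite -[LHS]gamul1r -hsum gamul_sumr (bigID (fun k : 'I_s.+1 => (k <= i)%N)) /=.
  rewrite [X in _ + X]big1 ?addr0.
    by apply: eq_bigr => k _; rewrite ffunE fc.
  move=> k kni; have : ~~ P k by apply: contra kni => /imax.
  by rewrite negbK => /eqP/ffunP/(_ j); rewrite !ffunE.
rewrite /wtl /rwt (bigID (fun j => ci j != 0)) /= -sum_nat_const.
apply: leq_trans (leq_addr _ _); rewrite (eq_bigl (fun j => ci j != 0)); last by move=> j; rewrite inE.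
apply: leq_sum => j cij.
apply: (@mind_le _ _ _ _ _ (cjB j)).
by apply: contraNneq cij => cj0; rewrite /ci ffunE cj0 gamul0l.
Qed.
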